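(* For an integral domain $D$, the following conditions are equivalent. (i) The integral closure $\overline{D}$ of $D$ is a Pr\''ufer domain. (ii) The set of Pr\''ufer overrings of $D$ is quasi-compact as a subspace of the space of all overrings of $D$.
   Context: Let $D$ be an integral domain with quotient field $K$. The set of all overrings of $D$ (rings $R$ with $D\subseteq R\subseteq K$) carries the Zariski topology, whose basic open sets are $\{R \mid F\subseteq R\}$ for $F$ ranging among finite subsets of $K$; it is a spectral space. *)

(* Defs.v *)
(* Overrings of D are represented as predicates on the
   quotient field K. *)
From mathcomp Require Import all_boot all_algebra.
Set Implicit Arguments. Unset Strict Implicit. Unset Printing Implicit Defensive.
Import GRing.Theory.
Local Open Scope ring_scope.

Section Defs.
Variable K : fieldType.

(* R is a subring of K (hence an integral domain). *)
Definition subring (R : K -> Prop) : Prop :=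
  [/\ R 0, R 1, (forall x y, R x -> R y -> R (x - y))
    & (forall x y, R x -> R y -> R (x * y))].

Definition is_quotient_field (D : K -> Prop) : Prop :=
  forall x : K, exists a b : K, [/\ D a, D b, b != 0 & x = a / b].

Definition overring (D R : K -> Prop) : Prop :=
  subring R /\ (forall x, D x -> R x).

Definition int_closure (D : K -> Prop) : K -> Prop :=
  fun x => exists p : {poly K}, [/\ p \is monic, (forall i, D p`_i) & root p x].

Definition fg_ideal (R I : K -> Prop) : Prop :=
  exists gs : seq K, (forall g, g \in gs -> R g) /\
    forall x, I x <-> exists rs : seq K,
      [/\ size rs = size gs, (forall r, r \in rs -> R r)
        & x = \sum_(i < size gs) rs`_i * gs`_i].

Definition frac_inv (R I : K -> Prop) : K -> Prop :=
  fun y => forall x, I x -> R (y * x).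

Definition mod_prod (I J : K -> Prop) : K -> Prop :=
  fun z => exists s : seq (K * K),
    (forall p, p \in s -> I p.1 /\ J p.2) /\ z = \sum_(p <- s) p.1 * p.2.

Definition invertible (R I : K -> Prop) : Prop :=
  forall z, mod_prod I (frac_inv R I) z <-> R z.

Definition prufer (R : K -> Prop) : Prop :=
  forall I : K -> Prop, fg_ideal R I -> (exists x, I x /\ x != 0) ->
    invertible R I.

(* Open sets of the Zariski topology on the space of overrings of D:
   the topology generated by the basic opens {T | F ⊆ T}, F finite. *)
Definition zariski_open (D : K -> Prop) (U : (K -> Prop) -> Prop) : Prop :=
  forall R, U R -> overring D R /\
    exists F : seq K, (forall x, x \in F -> R x) /\
      forall T, overring D T -> (forall x, x \in F -> T x) -> U T.

Definition quasi_compact (D : K -> Prop) (S : (K -> Prop) -> Prop) : Prop :=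
  forall (I : Type) (U : I -> (K -> Prop) -> Prop),
    (forall i, zariski_open D (U i)) ->
    (forall R, S R -> exists i, U i R) ->
    exists (n : nat) (f : 'I_n -> I), forall R, S R -> exists k, U (f k) R.

End Defs.

(* Main.v *)
From HB Require Import structures.
Require Import Defs.
From mathcomp Require Import all_boot all_algebra.
From mathcomp Require Import ring.
From Stdlib Require Import ClassicalEpsilon Classical.
From mathcomp Require classical_sets.
Set Implicit Arguments. Unset Strict Implicit. Unset Printing Implicit Defensive.
Import GRing.Theory.
Local Open Scope ring_scope.

Definition pb (P : Prop) : bool := if excluded_middle_informative P then true else false.
Lemma pbP (P : Prop) : reflect P (pb P).
Proof. rewrite /pb; case: excluded_middle_informative => h; by constructor. Qed.

Section IC.
Variables (K : fieldType) (D : K -> Prop) (hD : subring D).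
Definition Dp : pred K := fun x => pb (D x).
Lemma Dp_closed : subring_closed Dp.
Proof.
case: hD => _ h1 hs hm; split.
- exact/pbP.
- by move=> x y /pbP hx /pbP hy; apply/pbP; apply: hs.
- by move=> x y /pbP hx /pbP hy; apply/pbP; apply: hm.
Qed.
HB.instance Definition _ := GRing.isSubringClosed.Build K Dp Dp_closed.
Record DT := MkDT { dval : K; dvalP : dval \in Dp }.
HB.instance Definition _ := [isSub for dval].
HB.instance Definition _ := [Choice of DT by <:].
HB.instance Definition _ := [SubChoice_isSubComNzRing of DT by <:].

Lemma Dp_val (u : DT) : D (val u).
Proof. by apply/pbP; case: u. Qed.

Lemma ic_to x : int_closure D x -> integralOver (val : DT -> K) x.
Proof.
case=> p [mp cp rp].
pose q : {poly DT} := \poly_(i < size p) insubd (0 : DT) p`_i.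
have hq : map_poly val q = p.
  apply/polyP => i; rewrite coef_map coef_poly.
  case: ltnP => hi.
    by rewrite /= insubdK //; apply/pbP; apply: cp.
  by rewrite nth_default.
exists q; last by rewrite hq.
move: mp; rewrite -hq monicE lead_coef_map_inj; last first.
- exact: (rmorph0 (val : {rmorphism DT -> K})).
- exact: val_inj.
move=> /eqP h; apply/monicP; apply: val_inj; rewrite h.
by rewrite (rmorph1 (val : {rmorphism DT -> K})).
Qed.

Lemma ic_from x : integralOver (val : DT -> K) x -> int_closure D x.
Proof.
case=> q mq rq; exists (map_poly val q); split => //.
  exact: (monic_map (val : {rmorphism DT -> K}) mq).
by move=> i; rewrite coef_map; apply: Dp_val.
Qed.

Lemma ic_subring : subring (int_closure D).
Proof.
split.
- by apply: ic_from; apply: integral0.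
- by apply: ic_from; apply: integral1.
- move=> x y /ic_to hx /ic_to hy; apply: ic_from; exact: integral_sub.
- move=> x y /ic_to hx /ic_to hy; apply: ic_from; exact: integral_mul.
Qed.

Lemma ic_ge x : D x -> int_closure D x.
Proof.
move=> hx; exists ('X - x%:P); split.
- exact: monicXsubC.
- move=> i; rewrite coefB coefX coefC.
  case: hD => h0 h1 hs hm.
  case: i => [|[|i]] /=.
  + by rewrite sub0r; have := hs _ _ h0 hx; rewrite sub0r.
  + by rewrite subr0.
  + by rewrite subr0.
- by rewrite root_XsubC.
Qed.
End IC.
Section SR.
Variables (K : fieldType) (R : K -> Prop) (hR : subring R).
Lemma sr0 : R 0. Proof. by case: hR. Qed.
Lemma sr1 : R 1. Proof. by case: hR. Qed.
Lemma srB x y : R x -> R y -> R (x - y). Proof. by case: hR => _ _ h _; apply: h. Qed.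
Lemma srM x y : R x -> R y -> R (x * y). Proof. by case: hR => _ _ _ h; apply: h. Qed.
Lemma srN x : R x -> R (- x).
Proof. by move=> hx; rewrite -sub0r; apply: srB => //; apply: sr0. Qed.
Lemma srD x y : R x -> R y -> R (x + y).
Proof. by move=> hx hy; rewrite -[y]opprK; apply: srB => //; apply: srN. Qed.
Lemma srX x n : R x -> R (x ^+ n).
Proof. move=> hx; elim: n => [|n IH]; first by rewrite expr0; apply: sr1.
by rewrite exprS; apply: srM. Qed.
Lemma sr_sum (I : Type) (r : seq I) (F : I -> K) :
  (forall i, R (F i)) -> R (\sum_(i <- r) F i).
Proof.
move=> hF; elim: r => [|i r IH]; first by rewrite big_nil; apply: sr0.
by rewrite big_cons; apply: srD.
Qed.

Lemma int_key (p : {poly K}) x s u w :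
  p \is monic -> (forall i, R p`_i) -> root p x ->
  s + u = 1 -> R s -> R (s * x) -> R w -> u = x * w -> R x.
Proof.
move=> mp cp rp su Rs Rsx Rw uxw.
have Ru : R u.
  have -> : u = 1 - s by rewrite -su; ring.
  exact: srB sr1 Rs.
have p0 : p != 0 by apply: monic_neq0.
move: rp; rewrite /root horner_coef.
have [n hn] : exists n, size p = n.+1.
  by exists (size p).-1; rewrite prednK // size_poly_gt0.
have ln : p`_n = 1 by move/monicP: mp; rewrite lead_coefE hn.
rewrite hn big_ord_recr /= ln mul1r => /eqP h.
have hxn : x ^+ n = - \sum_(i < n) p`_i * x ^+ i.
  by apply/eqP; rewrite -addr_eq0 addrC h.
clear h; case: n hn ln hxn => [|m] hn ln hxn.
  by move: hxn; rewrite big_ord0 oppr0 expr0 => /eqP; rewrite oner_eq0.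
have hum : R (u ^+ m * x).
  have -> : u ^+ m * x = - \sum_(i < m.+1) p`_i * (u ^+ i * w ^+ (m - i)).
    rewrite uxw exprMn mulrAC -exprSr hxn mulNr mulr_suml; congr (- _).
    apply: eq_bigr => i _; rewrite -mulrA; congr (_ * _).
    have hi : (i <= m)%N by rewrite -ltnS.
    by rewrite exprMn -mulrA -exprD subnKC // mulrC.
  apply: srN; apply: sr_sum => i; apply: srM => //; apply: srM; apply: srX => //.
have [q [Rq hq]] : exists q, R q /\ (s + u) ^+ m = u ^+ m + s * q.
  elim: m {hn ln hxn hum} => [|m [q [Rq hq]]].
    by exists 0; split; [apply: sr0 | rewrite !expr0 mulr0 addr0].
  exists (u ^+ m + q * (s + u)); split.
    by apply: srD; [apply: srX | apply: srM => //; apply: srD].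
  rewrite exprS hq exprS; ring.
have -> : x = u ^+ m * x + (s * x) * q.
  by rewrite mulrAC -mulrDl -hq su expr1n mul1r.
by apply: srD; [|apply: srM].
Qed.
End SR.
Section PR.
Variables (K : fieldType) (R : K -> Prop) (hR : subring R) (hP : prufer R).

Lemma inv_two a b : R a -> R b -> b != 0 ->
  exists Y Z, [/\ 1 = b * Y + a * Z, R (b * Y), R (a * Y), R (b * Z) & R (a * Z)].
Proof.
move=> Ra Rb b0.
pose I := fun z => exists r0 r1, [/\ R r0, R r1 & z = r0 * b + r1 * a].
have fgI : fg_ideal R I.
  exists [:: b; a]; split.
    by move=> g; rewrite !inE => /orP [] /eqP ->.
  move=> z; split.
    case=> r0 [r1 [h0 h1 ->]]; exists [:: r0; r1]; split => //.
      by move=> r; rewrite !inE => /orP [] /eqP ->.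
    by rewrite !big_ord_recl big_ord0 /= addr0.
  case=> rs [hs hr ->]; case: rs hs hr => [|r0 [|r1 [|]]] // _ hr.
  exists r0, r1; split.
  - by apply: hr; rewrite !inE eqxx.
  - by apply: hr; rewrite !inE eqxx orbT.
  - by rewrite !big_ord_recl big_ord0 /= addr0.
have Ib : I b by exists 1, 0; split; [exact: sr1|exact: sr0| rewrite mul1r mul0r addr0].
have Ia : I a by exists 0, 1; split; [exact: sr0|exact: sr1| rewrite mul1r mul0r add0r].
have [s [hs e1]] := (proj2 (hP fgI (ex_intro _ b (conj Ib b0)) 1) (sr1 hR)).
suff : forall s : seq (K * K), (forall p, p \in s -> I p.1 /\ frac_inv R I p.2) ->
  exists Y Z, [/\ \sum_(p <- s) p.1 * p.2 = b * Y + a * Z, R (b * Y), R (a * Y),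
     R (b * Z) & R (a * Z)].
  move=> /(_ s hs) [Y [Z [h1 h2 h3 h4 h5]]]; exists Y, Z; split => //.
  by rewrite e1.
elim=> [|[p1 p2] t IH] hst.
  exists 0, 0; rewrite big_nil !mulr0 addr0; split => //; exact: sr0.
have /= [[r0 [r1 [R0 R1 ep1]]] hp2] := hst _ (mem_head _ _).
have [Y [Z [h1 h2 h3 h4 h5]]] : exists Y Z, [/\ \sum_(p <- t) p.1 * p.2 = b * Y + a * Z, R (b * Y), R (a * Y),
     R (b * Z) & R (a * Z)].
  by apply: IH => p hp; apply: hst; rewrite inE hp orbT.
have Rb2 := hp2 _ Ib; have Ra2 := hp2 _ Ia.
exists (r0 * p2 + Y), (r1 * p2 + Z); rewrite big_cons h1 /= ep1; split.
- ring.
- have -> : b * (r0 * p2 + Y) = r0 * (p2 * b) + b * Y by ring.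
  by apply: srD => //; apply: srM.
- have -> : a * (r0 * p2 + Y) = r0 * (p2 * a) + a * Y by ring.
  by apply: srD => //; apply: srM.
- have -> : b * (r1 * p2 + Z) = r1 * (p2 * b) + b * Z by ring.
  by apply: srD => //; apply: srM.
- have -> : a * (r1 * p2 + Z) = r1 * (p2 * a) + a * Z by ring.
  by apply: srD => //; apply: srM.
Qed.

Lemma prufer_ic (D : K -> Prop) : is_quotient_field D -> (forall x, D x -> R x) ->
  forall x, int_closure D x -> R x.
Proof.
move=> hK hDR x [p [mp cp rp]].
have [a [b [Da Db b0 e0]]] := hK x; rewrite e0.
have [Y [Z [e h1 h2 h3 h4]]] := inv_two (hDR _ Da) (hDR _ Db) b0.
apply: (@int_key _ R hR p (a / b) (b * Y) (a * Z) (b * Z) mp) => //.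
- by move=> i; apply: hDR.
- by move: rp; rewrite e0.
- by have -> : b * Y * (a / b) = a * Y by field.
- by field.
Qed.
End PR.


Section Wit.
Variables (K : fieldType) (R : K -> Prop) (hR : subring R).

Definition wit (n : nat) (a : nat -> K) :=
  exists y : nat -> K, \sum_(i < n) a i * y i = 1 /\
    forall i l, (i < n)%N -> (l < n)%N -> R (y i * a l).

Definition gen_by (gs : seq K) (I : K -> Prop) :=
  forall x, I x <-> exists rs : seq K,
      [/\ size rs = size gs, (forall r, r \in rs -> R r)
        & x = \sum_(i < size gs) rs`_i * gs`_i].

Lemma sr_sum_in (I : eqType) (r : seq I) (F : I -> K) :
  (forall i, i \in r -> R (F i)) -> R (\sum_(i <- r) F i).
Proof.
elim: r => [|i r IH] hF; first by rewrite big_nil; apply: sr0.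
rewrite big_cons; apply: srD => //; first by apply: hF; rewrite mem_head.
by apply: IH => j hj; apply: hF; rewrite inE hj orbT.
Qed.

Lemma gen_in gs I : (forall g, g \in gs -> R g) -> gen_by gs I ->
  forall i, (i < size gs)%N -> I gs`_i.
Proof.
move=> hg hI i hi; apply/hI.
exists (mkseq (fun j => (j == i)%:R) (size gs)); split.
- by rewrite size_mkseq.
- move=> r /mapP [j _ ->]; case: (j == i); [exact: sr1 | exact: sr0].
- rewrite (bigD1 (Ordinal hi)) //= nth_mkseq // eqxx mul1r big1 ?addr0 //.
  move=> j hj; rewrite nth_mkseq // ; case: eqP => [hji|]; last by rewrite mul0r.
  by exfalso; move: hj; apply/negP; rewrite negbK; apply/eqP/val_inj.
Qed.

Lemma gen_sum gs I : (forall g, g \in gs -> R g) -> gen_by gs I -> forall x, I x ->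
  exists rs : nat -> K, (forall i, R (rs i)) /\ x = \sum_(i < size gs) rs i * gs`_i.
Proof.
move=> hg hI x /hI [rs [hs hr ->]]; exists (nth 0 rs); split => //.
move=> i; case: (ltnP i (size rs)) => h; first by apply: hr; apply: mem_nth.
by rewrite nth_default //; apply: sr0.
Qed.

Lemma prufer_wit (hP : prufer R) gs : (forall g, g \in gs -> R g) ->
  (exists i, (i < size gs)%N /\ gs`_i != 0) -> wit (size gs) (nth 0 gs).
Proof.
move=> hg [i0 [hi0 nz]].
pose I := fun x => exists rs : seq K,
      [/\ size rs = size gs, (forall r, r \in rs -> R r)
        & x = \sum_(i < size gs) rs`_i * gs`_i].
have hI : gen_by gs I by [].
have fgI : fg_ideal R I by exists gs.
have [s [hs e1]] := proj2 (hP _ fgI (ex_intro _ _ (conj (gen_in hg hI hi0) nz)) 1) (sr1 hR).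
suff : forall s : seq (K * K), (forall p, p \in s -> I p.1 /\ frac_inv R I p.2) ->
  exists y : nat -> K, \sum_(p <- s) p.1 * p.2 = \sum_(i < size gs) gs`_i * y i /\
    forall i l, (i < size gs)%N -> (l < size gs)%N -> R (y i * gs`_l).
  move=> /(_ s hs) [y [h1 h2]]; exists y; split => //; by rewrite -h1 e1.
elim=> [|[p1 p2] t IH] hst.
  exists (fun _ => 0); rewrite big_nil big1 => [|i _]; last by rewrite mulr0.
  by split => // i l _ _; rewrite mul0r; apply: sr0.
have /= [hp1 hp2] := hst _ (mem_head _ _).
have [rs [Rrs ep1]] := gen_sum hg hI hp1.
have [y [h1 h2]] : exists y : nat -> K, \sum_(p <- t) p.1 * p.2 = \sum_(i < size gs) gs`_i * y i /\
    forall i l, (i < size gs)%N -> (l < size gs)%N -> R (y i * gs`_l).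
  by apply: IH => p hp; apply: hst; rewrite inE hp orbT.
exists (fun i => rs i * p2 + y i); split.
  rewrite big_cons h1 /= ep1 mulr_suml -big_split /=; apply: eq_bigr => i _; ring.
move=> i l hi hl.
have -> : (rs i * p2 + y i) * gs`_l = rs i * (p2 * gs`_l) + y i * gs`_l by ring.
apply: (srD hR); [apply: (srM hR); [exact: Rrs | apply: hp2; exact: gen_in] | exact: h2].
Qed.

Lemma wit_inv gs I : (forall g, g \in gs -> R g) -> gen_by gs I ->
  wit (size gs) (nth 0 gs) -> invertible R I.
Proof.
move=> hg hI [y [e hy]] z; split.
  case=> s [hs ->]; apply: sr_sum_in => p hp.
  have [h1 h2] := hs p hp; rewrite mulrC; exact: h2.
move=> hz; exists [seq (gs`_i, y i * z) | i <- iota 0 (size gs)]; split.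
  move=> p /mapP [i]; rewrite mem_iota add0n => /andP [_ hi] -> /=; split.
    exact: gen_in.
  move=> w /(gen_sum hg hI) [rs [Rrs ->]].
  rewrite mulr_sumr; apply: (sr_sum hR) => l.
  case: (ltnP l (size gs)) => hl; last by rewrite nth_default // !mulr0; apply: sr0.
  have -> : y i * z * (rs l * gs`_l) = z * rs l * (y i * gs`_l) by ring.
  by apply: (srM hR); [apply: (srM hR) | apply: hy].
rewrite big_map /=.
have -> : iota 0 (size gs) = index_iota 0 (size gs) by rewrite /index_iota subn0.
rewrite big_mkord.
under eq_bigr do rewrite mulrA.
by rewrite -mulr_suml e mul1r.
Qed.

Lemma prufer_of_wit :
  (forall gs : seq K, (forall g, g \in gs -> R g) ->
    (exists i, (i < size gs)%N /\ gs`_i != 0) -> wit (size gs) (nth 0 gs)) ->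
  prufer R.
Proof.
move=> hw I [gs [hg hI]] [x [Ix nz]].
apply: (wit_inv hg hI); apply: hw => //.
case: (boolP [exists i : 'I_(size gs), gs`_i != 0]) => [/existsP [i hi]|].
  by exists i; split.
move=> /existsPn hall; exfalso; move: nz; apply/negP; rewrite negbK.
have [rs [_ ->]] := gen_sum hg hI Ix.
by apply/eqP; apply: big1 => i _; move: (hall i); rewrite negbK => /eqP ->; rewrite mulr0.
Qed.
End Wit.

Section Red.
Variables (K : fieldType) (R : K -> Prop) (hR : subring R).

Definition wit2 := forall b c, R b -> R c -> (b != 0 \/ c != 0) ->
  exists u w, [/\ b * u + c * w = 1, R (u * b), R (u * c), R (w * b) & R (w * c)].

Lemma fchoice (A B : Type) (Q : A -> B -> Prop) :
  (forall a, exists b, Q a b) -> exists f : A -> B, forall a, Q a (f a).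
Proof.
move=> H; exists (fun a => proj1_sig (constructive_indefinite_description _ (H a))).
move=> a; exact: proj2_sig (constructive_indefinite_description _ (H a)).
Qed.

Lemma wit_red (h2 : wit2) n (a : nat -> K) : (forall i, (i < n)%N -> R (a i)) ->
  (exists i, (i < n)%N /\ a i != 0) -> wit R n a.
Proof.
elim: n => [|n IH] hRa [i0 [hi0 nz0]]; first by [].
have R0 := sr0 hR.
case: (boolP [exists i : 'I_n, a i != 0]) => [/existsP [i1 hi1]|].
  have [y [ey hy]] := IH (fun i hi => hRa i (leqW hi)) (ex_intro _ (nat_of_ord i1) (conj (ltn_ord i1) hi1)).
  have H : forall i, exists p : K * K, (i < n)%N ->
      [/\ R (p.1 * a i), R (p.1 * a n), R (p.2 * a i), R (p.2 * a n)
        & a i * (a i * p.1 + a n * p.2) = a i].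
    move=> i.
    case: (ltnP i n) => hi; last by exists (0, 0).
    case: (eqVneq (a i) 0) => hai.
      by exists (0, 0) => _; rewrite hai /= !mul0r; split.
    have [u [w [e1 r1 r2 r3 r4]]] := h2 _ _ (hRa i (leqW hi)) (hRa n (ltnSn n)) (or_introl hai).
    by exists (u, w) => _ /=; rewrite e1 mulr1; split.
  have [f hf] := fchoice H.
  pose Y := fun j => if (j < n)%N then y j * a j * (f j).1
                      else \sum_(i < n) y i * a i * (f i).2.
  exists Y; split.
    rewrite big_ord_recr /= /Y ltnn.
    under eq_bigr => i _ do rewrite (ltn_ord i).
    rewrite mulr_sumr -big_split /= -ey; apply: eq_bigr => i _.
    have [_ _ _ _ e] := hf i (ltn_ord i).
    transitivity (y i * (a i * (a i * (f i).1 + a n * (f i).2))); first by ring.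
    by rewrite e mulrC.
  move=> j l hj hl; rewrite /Y.
  case: (ltnP j n) => hjn.
    have [r1 r2 r3 r4 _] := hf j hjn.
    case: (ltnP l n) => hln.
      have -> : y j * a j * (f j).1 * a l = (y j * a l) * ((f j).1 * a j) by ring.
      by apply: (srM hR); [apply: hy | ].
    have -> : l = n by apply/eqP; rewrite eqn_leq hln -ltnS hl.
    have -> : y j * a j * (f j).1 * a n = (y j * a j) * ((f j).1 * a n) by ring.
    by apply: (srM hR); [apply: hy | ].
  rewrite mulr_suml; apply: (sr_sum hR) => i.
  case: (ltnP i n) => hin; last first.
    by move: hin; rewrite leqNgt ltn_ord.
  have [r1 r2 r3 r4 _] := hf i hin.
  case: (ltnP l n) => hln.
    have -> : y i * a i * (f i).2 * a l = (y i * a l) * ((f i).2 * a i) by ring.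
    by apply: (srM hR); [apply: hy | ].
  have -> : l = n by apply/eqP; rewrite eqn_leq hln -ltnS hl.
  have -> : y i * a i * (f i).2 * a n = (y i * a i) * ((f i).2 * a n) by ring.
  by apply: (srM hR); [apply: hy | ].
move=> /existsPn hall.
have z i : (i < n)%N -> a i = 0.
  by move=> hi; move: (hall (Ordinal hi)); rewrite negbK => /eqP.
have nzn : a n != 0.
  case: (ltnP i0 n) => h; first by move: nz0; rewrite z // eqxx.
  by have -> : n = i0 by apply/eqP; rewrite eqn_leq h -ltnS hi0.
exists (fun j => if j == n then (a n)^-1 else 0); split.
  rewrite big_ord_recr /= eqxx big1 ?add0r ?mulfV // => i _.
  by rewrite (ltn_eqF (ltn_ord i)) ?mulr0.
move=> j l hj hl; case: eqP => _; last by rewrite mul0r.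
case: (ltnP l n) => hln; first by rewrite (z l hln) mulr0.
have -> : l = n by apply/eqP; rewrite eqn_leq hln -ltnS hl.
by rewrite mulVf //; apply: sr1.
Qed.
End Red.

Section Val.
Variables (K : fieldType).

Definition valring (V : K -> Prop) := subring V /\ forall z, z != 0 -> V z \/ V z^-1.

Variables (V : K -> Prop) (hV : valring V).
Let hS : subring V := proj1 hV.
Definition unitV a := a != 0 /\ V a^-1.
Definition MV a := V a /\ ~ unitV a.

Lemma MV0 : MV 0. Proof. by split; [apply: (sr0 hS) | case=> /eqP]. Qed.

Lemma MV_mul a c : V c -> MV a -> MV (c * a).
Proof.
move=> Vc [Va na]; split; first exact: (srM hS).
case=> nz Vi; apply: na; split.
  by apply: contraNneq nz => ->; rewrite mulr0.
have cnz : c != 0 by apply: contraNneq nz => ->; rewrite mul0r.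
have -> : a^-1 = c * (c * a)^-1 by rewrite invfM mulrA mulfV ?mul1r.
exact: (srM hS).
Qed.

Lemma MV_add a b : MV a -> MV b -> MV (a + b).
Proof.
move=> [Va na] [Vb nb]; split; first exact: (srD hS).
case=> nz Vi.
case: (eqVneq a 0) => a0; first by apply: nb; move: nz Vi; rewrite a0 add0r.
case: (eqVneq b 0) => b0; first by apply: na; move: nz Vi; rewrite b0 addr0.
have abnz : a / b != 0 by rewrite mulf_neq0 // invr_eq0.
case: (proj2 hV _ abnz) => h.
  apply: nb; split => //.
  have -> : b^-1 = (a / b + 1) * (a + b)^-1.
    by field; rewrite nz b0.
  by apply: (srM hS) => //; apply: (srD hS) => //; apply: (sr1 hS).
apply: na; split => //.
have -> : a^-1 = (b / a + 1) * (a + b)^-1.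
  by field; rewrite nz a0.
by apply: (srM hS) => //; apply: (srD hS); [by move: h; rewrite invf_div | apply: (sr1 hS)].
Qed.

Lemma MV_opp a : MV a -> MV (- a).
Proof. move=> h; rewrite -mulN1r; apply: MV_mul => //; apply: (srN hS) => //; apply: (sr1 hS). Qed.

Lemma unit_1M t : MV t -> unitV (1 + t).
Proof.
move=> ht; apply: NNPP => hn.
have : MV ((1 + t) - t) by apply: MV_add; [split => //; apply: (srD hS) => //; [apply: (sr1 hS) | case: ht] | apply: MV_opp].
rewrite addrK => [[_]]; apply; split; [exact: oner_neq0 | rewrite invr1; apply: (sr1 hS)].
Qed.
End Val.

Section Geo.
Variable K : fieldType.
Definition geo (z : K) (N : nat) := \sum_(i < N) z ^+ i.

Lemma geoS z N : geo z N.+1 = geo z N + z ^+ N.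
Proof. by rewrite /geo big_ord_recr. Qed.

Lemma geo0 z : geo z 0 = 0. Proof. by rewrite /geo big_ord0. Qed.

Lemma geoD z a b : geo z (a + b) = geo z a + z ^+ a * geo z b.
Proof.
elim: b => [|b IH]; first by rewrite addn0 geo0 mulr0 addr0.
by rewrite addnS !geoS IH exprD mulrDr addrA.
Qed.

Lemma geo1 z : geo z 1 = 1. Proof. by rewrite geoS geo0 add0r expr0. Qed.

Lemma geoS' z N : geo z N.+1 = 1 + z * geo z N.
Proof. by rewrite -add1n geoD geo1 expr1. Qed.

Lemma geo_rev z N : z != 0 -> geo z N.+1 = z ^+ N * geo z^-1 N.+1.
Proof.
move=> nz; elim: N => [|N IH]; first by rewrite expr0 mul1r !geo1.
by rewrite geoS IH [in RHS]geoS' exprS; field.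
Qed.

Lemma geo_in (V : K -> Prop) : subring V -> forall z N, V z -> V (geo z N).
Proof. move=> hS z N hz; apply: (sr_sum hS) => i; exact: srX. Qed.

Lemma geo_mult z r q : geo z (q * r) = geo z r * geo (z ^+ r) q.
Proof.
elim: q => [|q IH]; first by rewrite mul0n !geo0 mulr0.
by rewrite mulSn geoD IH geoS'; ring.
Qed.
End Geo.

Section PerRing.
Variables (K : fieldType) (V : K -> Prop) (hV : valring V).
Let hS : subring V := proj1 hV.

Lemma per_ring z : z != 0 -> exists r, (2 <= r)%N /\
  (V z -> V z^-1 -> forall N, ~ unitV V (geo z N) -> (r %| N)%N).
Proof.
move=> nz.
case: (classic (V z /\ V z^-1 /\ exists N, (0 < N)%N /\ ~ unitV V (geo z N)));
  last first.
  move=> hn; exists 2; split => // Vz Vzi N hN.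
  case: N hN => // N hN; exfalso; apply: hn; split => //; split => //.
  by exists N.+1.
move=> [Vz [Vzi hex]].
have hexb : exists N, pb ((0 < N)%N /\ ~ unitV V (geo z N)).
  by case: hex => N hN; exists N; apply/pbP.
case: (ex_minnP hexb) => r /pbP [r0 hr] rmin.
have r1 : r != 1%N.
  by apply: contra_notN hr => /eqP ->; rewrite geo1; split; [apply: oner_neq0 | rewrite invr1; apply: (sr1 hS)].
have MVg N : ~ unitV V (geo z N) -> MV V (geo z N).
  by move=> h; split => //; apply: geo_in.
exists r; split; first by case: r r0 r1 hr rmin => [|[|r]].
move=> _ _ N hN.
have hq q : MV V (geo z (q * r)).
  elim: q => [|q IH]; first by rewrite mul0n geo0; apply: (MV0 hV).
  rewrite mulSn geoD; apply: (MV_add hV) => //; first by apply: MVg.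
  by apply: (MV_mul hV) => //; apply: (srX hS).
have eN := divn_eq N r.
set q := (N %/ r)%N in eN; set s := (N %% r)%N in eN.
case: (posnP s) => s0; first by apply/dvdnP; exists q; rewrite {1}eN s0 addn0.
exfalso.
have hs : MV V (geo z s).
  have e2 : geo z s = (z^-1) ^+ (q * r) * (geo z N - geo z (q * r)).
    rewrite eN geoD addrC addKr mulrA -exprMn mulVf ?expr1n ?mul1r //.
  rewrite e2; apply: (MV_mul hV); first exact: (srX hS).
  by rewrite -[_ - _]addrC; apply: (MV_add hV); [apply: (MV_opp hV) | apply: MVg].
have : (r <= s)%N.
  by apply: rmin; apply/pbP; split => //; case: hs.
by rewrite /s leqNgt ltn_pmod.
Qed.
End PerRing.

Section PerK.
Variables (K : fieldType) (V : K -> Prop) (hV : valring V).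
Let hS : subring V := proj1 hV.

Lemma unit_geo u M : V u -> ~ V u^-1 -> unitV V (geo u M.+1).
Proof.
move=> Vu nVu; rewrite geoS' addrC -[X in unitV V X]addrC; apply: unit_1M => //.
rewrite mulrC; apply: (MV_mul hV); first exact: geo_in.
by split => // [[_ h]]; apply: nVu.
Qed.

Lemma per_k z M : z != 0 -> (V z -> V z^-1 -> unitV V (geo z M.+2)) ->
  [/\ unitV V (geo z M.+2), V (geo z M.+2)^-1, V (z * (geo z M.+2)^-1)
    & V (geo z M.+1 * (geo z M.+2)^-1)].
Proof.
move=> nz hC.
have fin : unitV V (geo z M.+2) -> V z ->
  [/\ unitV V (geo z M.+2), V (geo z M.+2)^-1, V (z * (geo z M.+2)^-1)
    & V (geo z M.+1 * (geo z M.+2)^-1)].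
  move=> [g0 Vg] Vz; split => //; apply: (srM hS) => //; exact: geo_in.
case: (classic (V z)) => Vz; case: (classic (V z^-1)) => Vzi.
- by apply: fin => //; apply: hC.
- by apply: fin => //; apply: unit_geo.
- set u := z^-1.
  have nVu : ~ V u^-1 by rewrite /u invrK.
  have [G0 VG] := unit_geo M.+1 Vzi nVu.
  have VH := geo_in hS M.+1 Vzi.
  have eg : geo z M.+2 = z ^+ M.+1 * geo u M.+2 by apply: geo_rev.
  have eh : geo z M.+1 = z ^+ M * geo u M.+1 by apply: geo_rev.
  have g0 : geo z M.+2 != 0 by rewrite eg mulf_neq0 // expf_neq0.
  have e1 : (geo z M.+2)^-1 = u ^+ M.+1 * (geo u M.+2)^-1.
    by rewrite eg invfM exprVn.
  have V1 : V (geo z M.+2)^-1 by rewrite e1; apply: (srM hS) => //; apply: (srX hS).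
  split => //.
  + have -> : z * (geo z M.+2)^-1 = u ^+ M * (geo u M.+2)^-1.
      by rewrite e1 /u exprS mulrA mulrA mulfV ?mul1r.
    by apply: (srM hS) => //; apply: (srX hS).
  + have -> : geo z M.+1 * (geo z M.+2)^-1 = u * geo u M.+1 * (geo u M.+2)^-1.
      by rewrite eh e1 /u exprS exprVn; field; rewrite G0 nz expf_neq0.
    by apply: (srM hS) => //; apply: (srM hS).
- by exfalso; case: (proj2 hV _ nz).
Qed.
End PerK.

Section Inter.
Variables (K : fieldType) (Vs : nat -> K -> Prop) (m : nat)
  (hVs : forall k, (k < m)%N -> valring (Vs k)).
Definition Rint := fun x => forall k, (k < m)%N -> Vs k x.

Lemma Rint_sub : subring Rint.
Proof.
split.
- by move=> k hk; apply: (sr0 (proj1 (hVs hk))).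
- by move=> k hk; apply: (sr1 (proj1 (hVs hk))).
- by move=> x y hx hy k hk; apply: (srB (proj1 (hVs hk))); [apply: hx | apply: hy].
- by move=> x y hx hy k hk; apply: (srM (proj1 (hVs hk))); [apply: hx | apply: hy].
Qed.

Lemma inter_two z : exists s w, [/\ Rint s, Rint (s * z), Rint w & 1 - s = z * w].
Proof.
have hS := Rint_sub.
case: (eqVneq z 0) => [->|nz].
  exists 1, 0; rewrite !mulr0 subrr; split => //; [apply: (sr1 hS) | apply: (sr0 hS) | apply: (sr0 hS)].
case: (posnP m) => [m0|mpos].
  by exists 1, 0; rewrite mulr0 subrr; split => // k; rewrite m0.
have H : forall k, exists r, (k < m)%N -> (2 <= r)%N /\
  (Vs k z -> Vs k z^-1 -> forall N, ~ unitV (Vs k) (geo z N) -> (r %| N)%N).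
  move=> k; case: (ltnP k m) => hk; last by exists 0.
  by have [r hr] := @per_ring _ _ (hVs hk) z nz; exists r.
have [r hr] := fchoice H.
set P := (\prod_(k < m) r k)%N.
have P0 : (0 < P)%N.
  by apply: prodn_gt0 => k; have [h _] := hr k (ltn_ord k); apply: leq_trans h.
have [M eM] : exists M, P.+1 = M.+2 by exists P.-1; rewrite prednK.
have hk k : (k < m)%N -> [/\ unitV (Vs k) (geo z M.+2), Vs k (geo z M.+2)^-1,
    Vs k (z * (geo z M.+2)^-1) & Vs k (geo z M.+1 * (geo z M.+2)^-1)].
  move=> hkm; apply: (per_k (hVs hkm)) => // Vz Vzi; apply: NNPP => hn.
  have [r2 hdiv] := hr k hkm.
  have := hdiv Vz Vzi _ hn; rewrite -eM -addn1 dvdn_addr ?dvdn1.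
    by move/eqP => e; rewrite e in r2.
  by rewrite /P (bigD1 (Ordinal hkm)) //= dvdn_mulr.
have [[g0 _] _ _ _] := hk 0%N mpos.
exists (geo z M.+2)^-1, (geo z M.+1 * (geo z M.+2)^-1); split.
- by move=> k hkm; case: (hk k hkm).
- by move=> k hkm; case: (hk k hkm) => _ _ h _; rewrite mulrC.
- by move=> k hkm; case: (hk k hkm).
- rewrite geoS'; field.
  by rewrite -geoS'.
Qed.

Lemma Rint_wit2 : wit2 Rint.
Proof.
have hS := Rint_sub.
move=> b c Rb Rc nz.
case: (eqVneq b 0) => b0.
  have c0 : c != 0 by case: nz => //; rewrite b0 eqxx.
  exists 0, c^-1; rewrite b0; split.
  - by rewrite mul0r add0r mulfV.
  - by rewrite mul0r; apply: (sr0 hS).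
  - by rewrite mul0r; apply: (sr0 hS).
  - by rewrite mulr0; apply: (sr0 hS).
  - by rewrite mulVf //; apply: (sr1 hS).
have [s [w [Rs Rsz Rw e]]] := inter_two (c / b).
exists (s / b), (w / b); split.
- have -> : b * (s / b) + c * (w / b) = s + c / b * w by field.
  by rewrite -e addrC subrK.
- by rewrite divfK.
- by have -> : s / b * c = s * (c / b) by field.
- by rewrite divfK.
- have -> : w / b * c = c / b * w by field.
  rewrite -e; apply: (srB hS) => //; exact: (sr1 hS).
Qed.

Lemma Rint_prufer : prufer Rint.
Proof.
have hS := Rint_sub.
apply: (prufer_of_wit hS) => gs hg [i [hi nz]].
apply: (wit_red hS Rint_wit2).
- by move=> j hj; apply: hg; apply: mem_nth.
- by exists i.
Qed.
End Inter.

Lemma sum_rev (K : fieldType) n (F : nat -> K) :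
  \sum_(i < n) F i = \sum_(i < n) F (n - i.+1)%N.
Proof. by rewrite (reindex_inj rev_ord_inj). Qed.

Section Adj.
Variables (K : fieldType) (S : K -> Prop) (hS : subring S).
Definition adj (z : K) := fun t => exists p : {poly K}, (forall i, S p`_i) /\ t = p.[z].

Lemma S_bool (b : bool) : S b%:R.
Proof. by case: b; [apply: (sr1 hS) | apply: (sr0 hS)]. Qed.

Lemma adj_sub z : subring (adj z).
Proof.
split.
- by exists 0; rewrite horner0; split => // i; rewrite coef0; apply: (sr0 hS).
- by exists 1; rewrite hornerC; split => // i; rewrite coefC; case: (i == 0)%N;
    [apply: (sr1 hS) | apply: (sr0 hS)].
- move=> a b [p [hp ->]] [q [hq ->]]; exists (p - q); split; last by rewrite hornerD hornerN.
  by move=> i; rewrite coefB; apply: (srB hS).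
- move=> a b [p [hp ->]] [q [hq ->]]; exists (p * q); split; last by rewrite hornerM.
  by move=> i; rewrite coefM; apply: (sr_sum hS) => j; apply: (srM hS).
Qed.

Lemma adj_ge z t : S t -> adj z t.
Proof.
move=> ht; exists t%:P; rewrite hornerC; split => // i; rewrite coefC.
by case: (i == 0)%N => //; apply: (sr0 hS).
Qed.

Lemma adj_z z : adj z z.
Proof. by exists 'X; rewrite hornerX; split => // i; rewrite coefX; apply: S_bool. Qed.
End Adj.

Lemma not_in_Dy (K : fieldType) (D : K -> Prop) (hD : subring D) x :
  ~ int_closure D x -> x != 0 -> ~ adj D x^-1 x.
Proof.
move=> nic nz [p [hp ex]]; apply: nic.
case hn: (size p) => [|m].
  by move: nz; rewrite ex horner_coef hn big_ord0 eqxx.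
pose E := fun i : nat => if i == m.+1 then 1 else - p`_(m.+1 - i.+1).
exists (\poly_(i < m.+2) E i); split.
- have sz : size (\poly_(i < m.+2) E i) = m.+2.
    by rewrite size_poly_eq // /E eqxx oner_neq0.
  by rewrite monicE lead_coefE sz coef_poly ltnSn /E eqxx.
- move=> i; rewrite coef_poly; case: ltnP => _; last by apply: (sr0 hD).
  rewrite /E; case: eqP => _; [apply: (sr1 hD) | apply: (srN hD); apply: hp].
- rewrite /root horner_poly big_ord_recr /= /E eqxx mul1r.
  have -> : \sum_(i < m.+1) (if (i == m.+1 :> nat) then 1 else - p`_(m.+1 - i.+1)) * x ^+ i
      = - \sum_(i < m.+1) p`_i * x ^+ (m - i).
    rewrite (sum_rev m.+1 (fun i : nat => (if (i == m.+1) then 1 else - p`_(m.+1 - i.+1)) * x ^+ i)).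
    rewrite -sumrN; apply: eq_bigr => i _.
    have hi : (i < m.+1)%N := ltn_ord i.
    rewrite ifF; last by apply/negbTE; rewrite neq_ltn; apply/orP; left; rewrite subSS ltnS leq_subr.
    rewrite mulNr; congr (- (_ * _)).
    by rewrite !subSS subKn // -ltnS.
  have -> : \sum_(i < m.+1) p`_i * x ^+ (m - i) = x ^+ m * p.[x^-1].
    rewrite horner_coef hn mulr_sumr; apply: eq_bigr => i _.
    have hi : (i <= m)%N by rewrite -ltnS.
    rewrite mulrCA; congr (_ * _).
    apply: (mulIf (expf_neq0 i nz)).
    by rewrite -exprD subnK // -mulrA -exprMn mulVf // expr1n mulr1.
  by rewrite -ex -exprSr addrC subrr.
Qed.

Section Max.
Variables (K : fieldType) (D : K -> Prop) (x : K) (nz : x != 0).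
Let y := x^-1.
Definition Fam (S : K -> Prop) := [/\ subring S, (forall d, D d -> S d), S y & ~ S x].
Variables (S : K -> Prop) (hF : Fam S)
  (hmax : forall T, Fam T -> (forall t, S t -> T t) -> forall t, T t -> S t).
Let hS : subring S. Proof. by case: hF. Qed.
Let Sy : S y. Proof. by case: hF. Qed.
Let nSx : ~ S x. Proof. by case: hF. Qed.

Lemma yx : y * x = 1. Proof. by rewrite /y mulVf. Qed.

Lemma adj_fam z : ~ adj S z x -> S z.
Proof.
move=> h; apply: (hmax (T := adj S z)); last exact: adj_z.
- split; [exact: adj_sub | | exact: adj_ge | exact: h].
  by move=> d hd; apply: adj_ge => //; case: hF => _ hD _ _; apply: hD.
- by move=> t ht; apply: adj_ge.
Qed.

Lemma L_adj z : ~ S z -> exists p : {poly K}, (forall i, S p`_i) /\ 1 = y * p.[z].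
Proof.
move=> nSz; have : adj S z x by apply: NNPP => h; apply: nSz; apply: adj_fam.
by case=> p [hp ex]; exists p; split => //; rewrite -ex yx.
Qed.

Lemma pow_1y t k : S t -> exists b, S b /\ (1 - y * t) ^+ k = 1 - y * b.
Proof.
move=> St; elim: k => [|k [b [Sb e]]].
  by exists 0; split; [apply: (sr0 hS) | rewrite expr0 mulr0 subr0].
exists (t + b - y * t * b); split.
  by apply: (srB hS); [apply: (srD hS) | apply: (srM hS) => //; apply: (srM hS)].
by rewrite exprS e; ring.
Qed.

Lemma L1 t : S t -> 1 - y * t != 0 /\ S (1 - y * t)^-1.
Proof.
move=> St.
have hv : 1 - y * t != 0.
  apply/eqP => e; apply: nSx.
  have -> : x = t by apply: (mulrI (x := y)); [rewrite unitfE /y invr_eq0 | rewrite yx; apply/eqP; rewrite -subr_eq0 e].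
  exact: St.
split => //; apply: adj_fam => [[p [hp ex]]].
set v := 1 - y * t in hv ex.
set n := size p.
have ha : v ^+ n = y * \sum_(i < n) p`_i * v ^+ (n - i).
  rewrite -[LHS]mul1r -yx -mulrA; congr (_ * _).
  rewrite ex horner_coef -/n mulr_suml; apply: eq_bigr => i _.
  rewrite -mulrA; congr (_ * _).
  have hi : (i <= n)%N by apply: ltnW.
  have e : v ^+ n = v ^+ (n - i) * v ^+ i by rewrite -exprD subnK.
  by rewrite e mulrCA -exprMn mulVf // expr1n mulr1.
have Sa : S (\sum_(i < n) p`_i * v ^+ (n - i)).
  apply: (sr_sum hS) => i; apply: (srM hS) => //; apply: (srX hS).
  by apply: (srB hS); [apply: (sr1 hS) | apply: (srM hS)].
have [b [Sb eb]] := pow_1y n St.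
apply: nSx.
have -> : x = (\sum_(i < n) p`_i * v ^+ (n - i)) + b.
  have e1 : y * ((\sum_(i < n) p`_i * v ^+ (n - i)) + b) = 1.
    by rewrite mulrDr -ha /v eb; ring.
  by rewrite -[LHS]mulr1 -e1 mulrA [x * y]mulrC yx mul1r.
exact: (srD hS).
Qed.
Lemma key z (p q : {poly K}) : z != 0 -> (forall i, S p`_i) -> (forall i, S q`_i) ->
  1 = y * p.[z] -> 1 = y * q.[z^-1] -> (size q <= size p)%N ->
  exists p' : {poly K}, [/\ (forall i, S p'`_i), (size p' < size p)%N & 1 = y * p'.[z]].
Proof.
move=> nzz hp hq ep eq hsz.
case hn: (size p) => [|n].
  by move: ep; rewrite horner_coef hn big_ord0 mulr0 => /eqP; rewrite oner_eq0.
have [hv Sc] := L1 (hq 0%N).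
set c := (1 - y * q`_0)^-1 in Sc.
set w := z^-1.
pose p' := \poly_(i < n) (p`_i + p`_n * y * c * q`_(n - i)).
exists p'; split.
- move=> i; rewrite coef_poly; case: ltnP => _; last exact: (sr0 hS).
  apply: (srD hS) => //; apply: (srM hS) => //; apply: (srM hS) => //; exact: (srM hS).
- by rewrite ltnS size_poly.
have qw : q.[w] = x by rewrite -[RHS]mulr1 eq mulrA [x * y]mulrC yx mul1r.
have hA : \sum_(i < n) q`_(n - i) * z ^+ i = z ^+ n * (x - q`_0).
  have hq2 : q.[w] = q`_0 + \sum_(k < n) q`_k.+1 * w ^+ k.+1.
    rewrite (horner_coef_wide (n := n.+1)); last by rewrite -hn.
    by rewrite big_ord_recl /= expr0 mulr1.
  have -> : x - q`_0 = \sum_(k < n) q`_k.+1 * w ^+ k.+1 by rewrite -qw hq2 addrC addKr.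
  rewrite (sum_rev n (fun i : nat => q`_(n - i) * z ^+ i)) mulr_sumr.
  apply: eq_bigr => k _.
  have hk : (k < n)%N := ltn_ord k.
  rewrite subKn // mulrCA; congr (_ * _).
  apply: (mulIf (expf_neq0 k.+1 nzz)).
  by rewrite -exprD subnK // -mulrA -exprMn mulVf // expr1n mulr1.
rewrite horner_poly.
under eq_bigr do rewrite mulrDl.
rewrite big_split /=.
have -> : \sum_(i < n) p`_n * y * c * q`_(n - i) * z ^+ i =
    p`_n * y * c * \sum_(i < n) q`_(n - i) * z ^+ i.
  by rewrite mulr_sumr; apply: eq_bigr => i _; rewrite mulrA.
have e2 : y * (x - q`_0) = 1 - y * q`_0 by rewrite mulrBr yx.
have e3 : c * (1 - y * q`_0) = 1 by rewrite /c mulVf.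
rewrite hA.
have -> : p`_n * y * c * (z ^+ n * (x - q`_0)) = p`_n * z ^+ n * (c * (y * (x - q`_0))) by ring.
by rewrite e2 e3 mulr1 ep horner_coef hn big_ord_recr.

Qed.

Lemma max_val : valring S.
Proof.
split => // z nzz; apply: NNPP => hn.
have nSz : ~ S z by move=> h; apply: hn; left.
have nSzi : ~ S z^-1 by move=> h; apply: hn; right.
have ex1 : exists k, pb (exists p : {poly K}, [/\ (forall i, S p`_i), size p = k & 1 = y * p.[z]]).
  by have [p [hp ep]] := L_adj nSz; exists (size p); apply/pbP; exists p.
have ex2 : exists k, pb (exists p : {poly K}, [/\ (forall i, S p`_i), size p = k & 1 = y * p.[z^-1]]).
  by have [p [hp ep]] := L_adj nSzi; exists (size p); apply/pbP; exists p.
case: (ex_minnP ex1) => n1 /pbP [p1 [hp1 sp1 ep1]] min1.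
case: (ex_minnP ex2) => n2 /pbP [q1 [hq1 sq1 eq1]] min2.
case: (leqP n2 n1) => h.
  have hs : (size q1 <= size p1)%N by rewrite sq1 sp1.
  have [p' [hp' sp' ep']] := key nzz hp1 hq1 ep1 eq1 hs.
  have hle : (n1 <= size p')%N by apply: min1; apply/pbP; exists p'.
  by move: hle; rewrite -sp1 leqNgt sp'.
have eq1' : 1 = y * p1.[z^-1^-1] by rewrite invrK.
have hs : (size p1 <= size q1)%N by rewrite sq1 sp1 ltnW.
have [q' [hq' sq' eq']] := key (invr_neq0 nzz) hq1 hp1 eq1 eq1' hs.
have hle : (n2 <= size q')%N by apply: min2; apply/pbP; exists q'.
by move: hle; rewrite -sq1 leqNgt sq'.
Qed.
End Max.

Lemma val_exists (K : fieldType) (D : K -> Prop) (hD : subring D) x :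
  ~ int_closure D x -> exists V, [/\ valring V, (forall d, D d -> V d) & ~ V x].
Proof.
move=> nic.
have nz : x != 0 by apply/eqP => ex; apply: nic; rewrite ex; apply: ic_ge => //; apply: (sr0 hD).
pose P' := fun S : K -> Prop => (forall t, ~ S t) \/ Fam D x S.
have hZ := @classical_sets.Zorn_bigcup K P'.
have [A [PA Amax]] : exists A : K -> Prop, P' A /\
    (forall B : K -> Prop, classical_sets.proper A B -> ~ P' B).
  apply: hZ => F FP Ftot.
  case: (classic (exists X, F X /\ exists t, X t)); last first.
    by move=> hne; left => t [X FX Xt]; apply: hne; exists X; split => //; exists t.
  move=> [X0 [FX0 [t0 X0t]]].
  have famF X t : F X -> X t -> Fam D x X.
    by move=> FX Xt; case: (FP X FX) => // h; exfalso; apply: (h t).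
  have [sX0 DX0 yX0 nxX0] := famF X0 t0 FX0 X0t.
  have big2 a b : classical_sets.bigcup F (fun X => X) a ->
      classical_sets.bigcup F (fun X => X) b ->
      exists X, [/\ F X, X a, X b & Fam D x X].
    move=> [X1 FX1 X1a] [X2 FX2 X2b].
    case: (Ftot X1 X2 FX1 FX2) => h.
      by exists X2; split => //; [apply: h | apply: (famF _ b)].
    by exists X1; split => //; [apply: h | apply: (famF _ a)].
  right; split.
  - split.
    + by exists X0 => //; apply: (sr0 sX0).
    + by exists X0 => //; apply: (sr1 sX0).
    + move=> a b ha hb; have [X [FX Xa Xb [sX _ _ _]]] := big2 a b ha hb.
      by exists X => //; apply: (srB sX).
    + move=> a b ha hb; have [X [FX Xa Xb [sX _ _ _]]] := big2 a b ha hb.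
      by exists X => //; apply: (srM sX).
  - by move=> d hd; exists X0 => //; apply: DX0.
  - by exists X0.
  - move=> [X FX Xx]; have [_ _ _ nX] := famF X x FX Xx; exact: nX.
have famDy : Fam D x (adj D x^-1).
  split; [exact: adj_sub | | exact: adj_z | exact: not_in_Dy].
  by move=> d hd; apply: adj_ge.
have famA : Fam D x A.
  case: PA => // hA; exfalso; apply: (Amax (adj D x^-1)); last by right.
  split; first by move=> t /hA.
  move=> h; apply: (hA 0); apply: h; apply: adj_ge => //; apply: (sr0 hD).
have hmax : forall T, Fam D x T -> (forall t, A t -> T t) -> forall t, T t -> A t.
  move=> T fT AT; apply: NNPP => hn; apply: (Amax T); last by right.
  split => // h; apply: hn => t; exact: h.
exists A; split.
- exact: (max_val nz famA hmax).
- by case: famA.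
- by case: famA.
Qed.

Theorem corollary6p2 (K : fieldType) (D : K -> Prop)
    (hD : subring D) (hK : is_quotient_field D) :
  prufer (int_closure D) <->
  quasi_compact D (fun R => overring D R /\ prufer R).
Proof.
split.
  move=> hP I U hU hcov.
  have hA : overring D (int_closure D) by split; [exact: ic_subring | exact: ic_ge].
  have [i Ui] := hcov _ (conj hA hP).
  have [_ [F [hF hT]]] := hU i _ Ui.
  exists 1%N, (fun _ => i) => R [[hRs hDR] hRp]; exists ord0.
  apply: hT; first by split.
  move=> x /hF; exact: (prufer_ic hRs hRp hK hDR).
move=> hQ.
have hA := ic_subring hD.
apply: (prufer_of_wit hA) => gs hg [i0 [hi0 nz]].
apply: NNPP => hnw.
set n := size gs in hnw hi0 *; set a := nth 0 gs in hnw nz *.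
pose U := fun (y : nat -> K) (T : K -> Prop) => [/\ overring D T,
   \sum_(i < n) a i * y i = 1 & forall i l, (i < n)%N -> (l < n)%N -> T (y i * a l)].
have hU : forall y, zariski_open D (U y).
  move=> y R [oR ey hR]; split => //.
  exists [seq y i * a l | i <- iota 0 n, l <- iota 0 n]; split.
    move=> z /allpairsP [[i l] /= [hi hl ->]].
    by move: hi hl; rewrite !mem_iota !add0n => /andP [_ hi] /andP [_ hl]; apply: hR.
  move=> T oT hT; split => // i l hi hl; apply: hT.
  by apply: allpairs_f; rewrite mem_iota add0n.
have hcov : forall R, overring D R /\ prufer R -> exists y, U y R.
  move=> R [[hRs hDR] hRp].
  have gR : forall g, g \in gs -> R g.
    by move=> g /hg; apply: (prufer_ic hRs hRp hK hDR).
  have [y [ey hy]] := prufer_wit hRs hRp gR (ex_intro _ i0 (conj hi0 nz)).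
  by exists y; split.
have [m [f hf]] := hQ _ U hU hcov.
have H : forall k : nat, exists V : K -> Prop, forall hk : (k < m)%N,
    [/\ valring V, (forall d, D d -> V d) &
      forall T, U (f (Ordinal hk)) T -> exists e, T e /\ ~ V e].
  move=> k; case: (classic (k < m)%N) => hk; last first.
    by exists (fun _ => True) => hk'; exfalso; apply: hk.
  set y := f (Ordinal hk).
  have full : valring (fun _ : K => True).
    by split; [split | move=> z _; left].
  case: (classic (exists T, U y T)) => [[T0 [_ ey _]]|hne]; last first.
    exists (fun _ => True) => hk'; rewrite (bool_irrelevance hk' hk); split => //.
    by move=> T hT; exfalso; apply: hne; exists T.
  have [e [ne he]] : exists e, ~ int_closure D e /\ forall T, U y T -> T e.
    apply: NNPP => hne; apply: hnw; exists y; split => // i l hi hl.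
    apply: NNPP => hn; apply: hne; exists (y i * a l); split => //.
    by move=> T [_ _ hT]; apply: hT.
  have [V [vV DV nVe]] := val_exists hD ne.
  exists V => hk'; rewrite (bool_irrelevance hk' hk); split => //.
  by move=> T hT; exists e; split => //; apply: he.
have [Vs hVs] := fchoice H.
have hVs' : forall k, (k < m)%N -> valring (Vs k).
  by move=> k hk; case: (hVs k hk).
have PR : overring D (Rint Vs m) /\ prufer (Rint Vs m).
  split; last exact: Rint_prufer hVs'.
  split; first exact: Rint_sub hVs'.
  by move=> d hd k hk; case: (hVs k hk) => _ hDV _; apply: hDV.
have [k hk] := hf _ PR.
have [_ _ h3] := hVs k (ltn_ord k).
have ek : Ordinal (ltn_ord k) = k by apply: val_inj.
rewrite ek in h3.
have [e [Re nVe]] := h3 _ hk.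
by apply: nVe; apply: Re; apply: ltn_ord.
Qed.
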